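(* Let $\mathbb{F}$ be a field of characteristic different from $2$ and $V$ an $n$-dimensional $\mathbb{F}$-vector space. Let $H\leq V$ be a hyperplane defined by $l_H\in V^*$, and let $G_H\leq \mathrm{GL}(V)$ be a finite group of reflections about $H$ (i.e. a finite group fixing $H$ pointwise). Let $K_H$ be the kernel of $\det$ on $G_H$, let $e_H=|G_H:K_H|$, let $s_H\in G_H$ be a diagonalizable reflection of order $e_H$ (with $s_H=1$ if $e_H=1$), and let $b_H$ be the dimension of the span of the root vectors of the transvections in $K_H$. Let $v_1,\dots,v_n$ be a basis of $V$ such that: $v_1,\dots,v_{n-1}$ is a basis of $H$; $v_1,\dots,v_{b_H}$ are $\mathbb{F}$-independent root vectors (with respect to $l_H$) of transvections in $K_H$; and $v_n\notin H$ is an eigenvector of $s_H$ with $l_H(v_n)=1$. (Such a basis always exists.) Let $z_1,\dots,z_n$ be the dual basis of $V^*$. Then: (1) If $\mu$ is a $K_H$-invariant differential form, written $\mu=\sum_I u_I\,dz_I$ with $u_I\in\mathbb{F}[V]$, and $J$ is an index set with $J\cap\{1,\dots,b_H\}\neq\varnothing$ and $n\notin J$, then $l_H$ divides $u_J$. (2) If moreover $\mu$ is $G_H$-invariant, then $u_J$ is divisible by $l_H^{e_H}$.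
   Context: $\mathbb{F}[V]=S(V^* )$; $\Omega^k=\mathbb{F}[V]\otimes\Lambda^k(V^* )$, $\Omega=\bigoplus_k\Omega^k$, with a group $G\le\mathrm{GL}(V)$ acting on $V^*$ by $(gf)(v)=f(g^{-1}v)$ and diagonally on $\Omega$. For an ordered index set $I=\{i_1<\dots<i_m\}\subseteq\{1,\dots,n\}$, $dz_I=dz_{i_1}\wedge\cdots\wedge dz_{i_m}$; every form is uniquely $\sum_I u_I dz_I$. A reflection about $H$ is a finite-order element of $\mathrm{GL}(V)$ with fixed space $H$; it satisfies $s(v)=v+l_H(v)\alpha_s$ for a root vector $\alpha_s\in V$, and it is a transvection if $\alpha_s\in H$, diagonalizable otherwise. *)

(* Defs.v *)
From HB Require Import structures.
From mathcomp Require Import all_boot all_order all_algebra.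
From mathcomp Require Import mpoly.
Set Implicit Arguments. Unset Strict Implicit. Unset Printing Implicit Defensive.
Import Order.TTheory GRing.Theory Num.Theory.
Local Open Scope ring_scope.

Section Defs.
Variables (F : fieldType) (n : nat).

(* V = 'cV[F]_n (column vectors), GL(V) acts by g *m v.
   A linear form l in V^* is a row vector; its value is lval l v. *)
Definition lval (l : 'rV[F]_n) (v : 'cV[F]_n) : F := (l *m v) 0 0.

Definition root_vector (l : 'rV[F]_n) (g : 'M[F]_n) (a : 'cV[F]_n) : Prop :=
  forall v, g *m v = v + lval l v *: a.

(* g is a diagonalizable reflection about H = ker l (root vector not in H) *)
Definition diag_reflection (l : 'rV[F]_n) (g : 'M[F]_n) : Prop :=
  g != 1%:M /\ exists a, root_vector l g a /\ lval l a != 0.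

Definition transvection_root (l : 'rV[F]_n) (K : seq 'M[F]_n) (a : 'cV[F]_n) : Prop :=
  exists2 t, t \in K & [/\ t != 1%:M, root_vector l t a & lval l a = 0].

(* the span of the set of vectors R has dimension d: R contains d linearly
   independent vectors (rows of W, transposed) spanning every element of R. *)
Definition span_dimension (R : 'cV[F]_n -> Prop) (d : nat) : Prop :=
  exists W : 'M[F]_(d, n),
    [/\ row_free W, (forall i, R (row i W)^T) & (forall a, R a -> (a^T <= W)%MS)].

(* Polynomial functions F[V] are {mpoly F[n]}, where 'X_i is the coordinate
   function z_(i+1) of the chosen basis.  If B is the coordinate matrix of
   g^-1 in that basis, then (g f)(c) = f(B c), i.e. 'X_i |-> sum_j B i j 'X_j. *)
Definition lin_subst (B : 'M[F]_n) : n.-tuple {mpoly F[n]} :=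
  [tuple \sum_(j < n) B i j *: 'X_j | i < n].

Definition act_poly (B : 'M[F]_n) (p : {mpoly F[n]}) : {mpoly F[n]} :=
  comp_mpoly (lin_subst B) p.

(* the (I,J) wedge_minor of B, rows I and columns J in increasing order;
   0 if #|I| <> #|J|.  It is the coefficient of dz_J in
   (g dz_(i1)) /\ ... /\ (g dz_(im)) where g dz_i = sum_j B i j dz_j. *)
Definition wedge_minor (B : 'M[F]_n) (I J : {set 'I_n}) : F :=
  match #|I| =P #|J| with
  | ReflectT e =>
      \det (\matrix_(a < #|I|, b < #|I|)
              B (enum_val (A := mem I) a) (enum_val (A := mem J) (cast_ord e b)))
  | ReflectF _ => 0
  end.

(* A differential form mu = sum_I u_I dz_I is the function I |-> u_I. *)
Definition diff_form := {set 'I_n} -> {mpoly F[n]}.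

Definition act_form (B : 'M[F]_n) (mu : diff_form) : diff_form :=
  fun J => \sum_(I : {set 'I_n}) act_poly B (mu I) * (wedge_minor B I J)%:MP.

Definition coord_inv (P g : 'M[F]_n) : 'M[F]_n := invmx P *m invmx g *m P.

Definition invariant_form (P : 'M[F]_n) (S : seq 'M[F]_n) (mu : diff_form) : Prop :=
  forall g, g \in S -> forall J, act_form (coord_inv P g) mu J = mu J.

Definition lpoly (P : 'M[F]_n) (l : 'rV[F]_n) : {mpoly F[n]} :=
  \sum_(i < n) lval l (col i P) *: 'X_i.

Definition mdvd (p q : {mpoly F[n]}) : Prop := exists r, q = r * p.

End Defs.

(* Main.v *)
Require Import Defs.
From HB Require Import structures.
From mathcomp Require Import all_boot all_order all_algebra perm.
From mathcomp Require Import mpoly.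
Import Order.TTheory GRing.Theory Num.Theory.
Local Open Scope ring_scope.

Section Poly.
Variables (F : fieldType) (n : nat).
Implicit Types (p q d : {mpoly F[n]}).

Lemma mdvd0 d : mdvd d 0.
Proof. by exists 0; rewrite mul0r. Qed.

Lemma mdvdD d p q : mdvd d p -> mdvd d q -> mdvd d (p + q).
Proof. by move=> [r ->] [s ->]; exists (r + s); rewrite mulrDl. Qed.

Lemma mdvdN d p : mdvd d p -> mdvd d (- p).
Proof. by move=> [r ->]; exists (- r); rewrite mulNr. Qed.

Lemma mdvdB d p q : mdvd d p -> mdvd d q -> mdvd d (p - q).
Proof. by move=> hp hq; apply: mdvdD => //; apply: mdvdN. Qed.

Lemma mdvdMl d p q : mdvd d p -> mdvd d (q * p).
Proof. by move=> [r ->]; exists (q * r); rewrite mulrA. Qed.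

Lemma mdvdMr d p q : mdvd d p -> mdvd d (p * q).
Proof. by move=> [r ->]; exists (r * q); rewrite -!mulrA [d * q]mulrC. Qed.

Lemma mdvdZ d c p : mdvd d p -> mdvd d (c *: p).
Proof. by move=> [r ->]; exists (c *: r); rewrite scalerAl. Qed.

Lemma mdvd_sum d (I : Type) (r : seq I) (P : pred I) (f : I -> {mpoly F[n]}) :
  (forall i, P i -> mdvd d (f i)) -> mdvd d (\sum_(i <- r | P i) f i).
Proof.
move=> h; elim/big_ind: _ => //; first exact: mdvd0.
by move=> x y; apply: mdvdD.
Qed.

Lemma mdvd_MB d x1 x2 y1 y2 : mdvd d (x1 - x2) -> mdvd d (y1 - y2) ->
  mdvd d (x1 * y1 - x2 * y2).
Proof.
move=> h1 h2.
have -> : x1 * y1 - x2 * y2 = x1 * (y1 - y2) + (x1 - x2) * y2.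
  by rewrite mulrBr mulrBl addrA subrK.
by apply: mdvdD; [apply: mdvdMl | apply: mdvdMr].
Qed.

Lemma mdvd_prodB d (I : Type) (r : seq I) (P : pred I) (f g : I -> {mpoly F[n]}) :
  (forall i, P i -> mdvd d (f i - g i)) ->
  mdvd d (\prod_(i <- r | P i) f i - \prod_(i <- r | P i) g i).
Proof.
move=> h; elim/big_ind2: _ => //.
- by rewrite subrr; apply: mdvd0.
- by move=> x1 x2 y1 y2; apply: mdvd_MB.
Qed.

Lemma mdvd_expB d x y k : mdvd d (x - y) -> mdvd d (x ^+ k - y ^+ k).
Proof.
move=> h; elim: k => [|k ih]; first by rewrite !expr0 subrr; apply: mdvd0.
by rewrite !exprS; apply: mdvd_MB.
Qed.

Lemma mdvd_comp_diff d (lq : n.-tuple {mpoly F[n]}) :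
  (forall i, mdvd d (tnth lq i - 'X_i)) ->
  forall p, mdvd d (comp_mpoly lq p - p).
Proof.
move=> h p; rewrite comp_mpolyEX [X in _ - X](mpolyE p) -sumrB.
apply: mdvd_sum => m _; rewrite -scalerBr; apply: mdvdZ.
rewrite comp_mpolyX [X in _ - X]mpolyXE_id.
by apply: mdvd_prodB => i _; apply: mdvd_expB.
Qed.

Lemma mdvdX_supp (i : 'I_n) p : mdvd 'X_i p ->
  forall m, m \in msupp p -> (0 < m i)%N.
Proof.
move=> [r ->] m; rewrite (perm_mem (msuppMX _ _)) => /mapP [m' _ ->].
by rewrite mnmDE mnm1E eqxx.
Qed.

Lemma supp_mdvdX (i : 'I_n) (k : nat) p :
  (forall m, m \in msupp p -> (k <= m i)%N) -> mdvd ('X_i ^+ k) p.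
Proof.
move=> h; exists (\sum_(m <- msupp p) p@_m *: 'X_[(m - U_(i) *+ k)%MM]).
rewrite {1}(mpolyE p) mulr_suml; apply: eq_big_seq => m hm.
rewrite -scalerAl mpolyXn -mpolyXD; congr (_ *: 'X_[_]).
apply/mnmP => j; rewrite mnmDE mnmBE mulmnE mnm1E.
case E: (_ == _); last by rewrite mul0n addn0 subn0.
by move/eqP: E => <-; rewrite mul1n subnK // h.
Qed.

Lemma comp_diag_coef (lq : n.-tuple {mpoly F[n]}) (w : 'I_n -> F) p m :
  (forall i, tnth lq i = w i *: 'X_i) ->
  (comp_mpoly lq p)@_m = (\prod_i w i ^+ m i) * p@_m.
Proof.
move=> h.
have hX m' : comp_mpoly lq 'X_[m'] = (\prod_i w i ^+ m' i) *: 'X_[m'].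
  rewrite comp_mpolyX mpolyXE_id -scaler_prod; apply: eq_bigr => i _.
  by rewrite h exprZn.
rewrite comp_mpolyEX raddf_sum /=.
rewrite (eq_bigr (fun m' => p@_m' * ((\prod_i w i ^+ m' i) * (m' == m)%:R))); last first.
  by move=> m' _; rewrite hX !mcoeffZ mcoeffX.
have [hm|hm] := boolP (m \in msupp p).
  rewrite (bigD1_seq m) //=.
  rewrite [X in _ + X]big1_seq; last first.
    by move=> m' /andP [/negbTE ne _]; rewrite ne mulr0 mulr0.
  by rewrite addr0 eqxx mulr1 mulrC.
rewrite big1_seq; last first.
  move=> m' /andP [_ hm']; have /negbTE -> : m' != m.
    by apply: contraNneq hm => <-.
  by rewrite mulr0 mulr0.
by rewrite memN_msupp_eq0 // mulr0.
Qed.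

End Poly.
Section Det.
Variable F : fieldType.

Lemma det_zero_row k (M : 'M[F]_k) a : (forall b, M a b = 0) -> \det M = 0.
Proof.
move=> h; rewrite (expand_det_row _ a) big1 // => b _; by rewrite h mul0r.
Qed.

Lemma det_prop_rows k (M : 'M[F]_k) a1 a2 c : a1 != a2 ->
  (forall b, M a1 b = c * M a2 b) -> \det M = 0.
Proof.
move=> ne h.
pose B := \matrix_(a, b) if a == a1 then M a2 b else M a b.
have hB : \det B = 0.
  apply: (determinant_alternate ne) => b; rewrite !mxE eqxx.
  by rewrite eq_sym (negbTE ne).
rewrite (@determinant_multilinear _ _ M B M a1 c 0); first by rewrite hB !mulr0 mul0r addr0.
- by apply/rowP => b; rewrite !mxE eqxx h mul0r addr0.
- apply/matrixP => a b; rewrite /row' !mxE.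
  by rewrite eq_sym (negbTE (neq_lift a1 a)).
- by [].
Qed.

Lemma det_signed_perm k (M : 'M[F]_k) (pi : 'I_k -> 'I_k) (eps : 'I_k -> F) :
  injective pi -> (forall a, eps a != 0) ->
  (forall a b, M a b = eps a * (pi a == b)%:R) -> \det M != 0.
Proof.
move=> ipi heps h.
have -> : M = diag_mx (\row_a eps a) *m perm_mx (perm ipi).
  by apply/matrixP => a b; rewrite mul_diag_mx !mxE h permE.
rewrite det_mulmx det_diag det_perm mulf_neq0 ?signr_eq0 //.
elim/big_ind: _ => //; first by rewrite oner_neq0.
  by move=> x y; apply: mulf_neq0.
by move=> a _; rewrite mxE.
Qed.

End Det.

Section Minor.
Variables (F : fieldType) (n : nat).
Implicit Types (B : 'M[F]_n) (I J : {set 'I_n}).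

Lemma minorE B I J (e : #|I| = #|J|) : wedge_minor B I J =
  \det (\matrix_(a < #|I|, b < #|I|)
          B (enum_val (A := mem I) a) (enum_val (A := mem J) (cast_ord e b))).
Proof. by rewrite /wedge_minor; case: eqP => // e'; rewrite (eq_irrelevance e' e). Qed.

Lemma minor_card B I J : #|I| != #|J| -> wedge_minor B I J = 0.
Proof. by rewrite /wedge_minor; case: eqP. Qed.

Lemma minor_id B I : (forall i k, i \in I -> k \in I -> B i k = (i == k)%:R) ->
  wedge_minor B I I = 1.
Proof.
move=> h; rewrite (minorE _ _ _ (erefl _)) -(det1 F #|I|); congr (\det _).
apply/matrixP => a b; rewrite !mxE cast_ord_id h ?enum_valP //.
by rewrite (inj_eq enum_val_inj).
Qed.

Lemma minor_zero_row B I J i : i \in I -> (forall k, k \in J -> B i k = 0) ->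
  wedge_minor B I J = 0.
Proof.
move=> hi h; case: (eqVneq #|I| #|J|) => [e|ne]; last by rewrite minor_card.
rewrite (minorE _ _ _ e); apply: (@det_zero_row _ _ _ (enum_rank_in hi i)) => b.
by rewrite mxE enum_rankK_in // h // enum_valP.
Qed.

Lemma minor_prop B I J i1 i2 c : i1 \in I -> i2 \in I -> i1 != i2 ->
  (forall k, k \in J -> B i1 k = c * B i2 k) -> wedge_minor B I J = 0.
Proof.
move=> h1 h2 ne h; case: (eqVneq #|I| #|J|) => [e|ne']; last by rewrite minor_card.
rewrite (minorE _ _ _ e).
apply: (@det_prop_rows _ _ _ (enum_rank_in h1 i1) (enum_rank_in h1 i2) c).
  case: eqP => // E; case/eqP: ne.
  by rewrite -(enum_rankK_in h1 h1) E enum_rankK_in.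
by move=> b; rewrite !mxE !enum_rankK_in // h // enum_valP.
Qed.

Lemma minor_unit_cols B I J : (forall i k, k \in J -> B i k = (i == k)%:R) ->
  wedge_minor B I J = (I == J)%:R.
Proof.
move=> h; have [E|ne] := eqVneq I J.
  rewrite -E in h *.
  have -> : wedge_minor B I I = 1 by apply: minor_id => i k _ hk; apply: h.
  by [].
case: (eqVneq #|I| #|J|) => [e|ne']; last by rewrite (minor_card _ _ _ ne').
have /subsetPn [i hi hni] : ~~ (I \subset J).
  by apply: contra ne => sub; rewrite eqEcard sub e leqnn.
rewrite (minor_zero_row _ _ _ _ hi) // => k hk; rewrite h //.
 by case: eqP hni => // ->; rewrite hk.
Qed.

End Minor.

Section Transv.
Variables (F : fieldType) (n : nat) (B : 'M[F]_n) (j mo : 'I_n).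
Hypothesis hjmo : j != mo.
Hypothesis hB1 : forall i k, k != mo -> B i k = (i == k)%:R.
Hypothesis hB2 : forall i, B i mo = (i == mo)%:R - (i == j)%:R.
Variable J : {set 'I_n}.
Hypothesis hjJ : j \in J.
Hypothesis hmoJ : mo \notin J.

Let Jp := mo |: (J :\ j).

Lemma inJp k : (k \in Jp) = (k == mo) || ((k != j) && (k \in J)).
Proof. by rewrite !inE. Qed.

Lemma moJp : mo \in Jp.
Proof. by rewrite inJp eqxx. Qed.

Lemma jJp : j \notin Jp.
Proof. by rewrite inJp (negbTE hjmo) eqxx. Qed.

Lemma cardJp : #|J| = #|Jp|.
Proof.
by rewrite /Jp cardsU1 (cardsD1 j J) hjJ in_setD1 (negbTE hmoJ) andbF.
Qed.

Lemma minorJpJp : wedge_minor B Jp Jp = 1.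
Proof.
apply: minor_id => i k hi hk.
case: (eqVneq k mo) => [->|nk]; last exact: hB1.
rewrite hB2; have /negbTE -> : i != j by apply: contraNneq jJp => <-.
by rewrite subr0.
Qed.

Lemma minor_other I : I != Jp -> I != J -> wedge_minor B I Jp = 0.
Proof.
move=> n1 n2.
case: (eqVneq #|I| #|Jp|) => [e|ne']; last exact: minor_card.
have [/existsP [i /andP [hi /andP [hni hij]]]|hall] :=
  boolP [exists i, (i \in I) && ((i \notin Jp) && (i != j))].
  apply: (@minor_zero_row F n B I Jp i hi) => k hk.
  case: (eqVneq k mo) => [ek|nk].
    rewrite ek hB2; have /negbTE -> : i != mo by apply: contraNneq hni => ->; exact: moJp.
    by rewrite (negbTE hij) subrr.
  by rewrite hB1 //; case: eqP hni => // ->; rewrite hk.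
have sub : forall i, i \in I -> (i \in Jp) || (i == j).
  move=> i hi; case: (boolP (i \in Jp)) => //= h1; apply/negPn/negP => h2.
  by apply: (negP hall); apply/existsP; exists i; rewrite hi h1 h2.
have hjI : j \in I.
  apply/negPn/negP => hj; case/negP: n1; rewrite eqEcard e leqnn andbT.
  apply/subsetP => i hi; have := sub i hi; case: eqP => [E|_]; last by rewrite orbF.
  by move: hi; rewrite E (negbTE hj).
have hmoI : mo \in I.
  apply/negPn/negP => hm; case/negP: n2; rewrite eqEcard cardJp -e leqnn andbT.
  apply/subsetP => i hi; have := sub i hi; case: eqP => [->|_]; first by rewrite orbT.
  rewrite orbF inJp => /orP [/eqP E|/andP [_ //]].
  by move: hi; rewrite E (negbTE hm).
apply: (@minor_prop F n B I Jp j mo (-1) hjI hmoI hjmo) => k hk.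
case: (eqVneq k mo) => [->|nk].
  rewrite !hB2 !eqxx (negbTE hjmo) eq_sym (negbTE hjmo) /=.
  by rewrite mulr0n mulr1n subr0 sub0r mulN1r.
rewrite !hB1 //.
have /negbTE -> : mo != k by rewrite eq_sym.
have /negbTE -> : j != k by apply: contraNneq jJp => ->.
by rewrite mulr0.
Qed.

Lemma minorJJp : wedge_minor B J Jp != 0.
Proof.
have e := cardJp.
rewrite (@minorE F n B J Jp e).
pose phi x := if x == j then mo else x.
have phiJ x : x \in J -> phi x \in Jp.
  move=> hx; rewrite /phi; case: eqP => [_|/eqP ne]; first exact: moJp.
  by rewrite inJp ne hx orbT.
pose evJ (a : 'I_#|J|) := enum_val (A := mem J) a.
have evJP a : evJ a \in J by apply: enum_valP.
pose pi (a : 'I_#|J|) : 'I_#|J| :=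
  cast_ord (esym e) (enum_rank_in moJp (phi (evJ a))).
pose eps (a : 'I_#|J|) : F := if evJ a == j then -1 else 1.
have piE a b : (pi a == b) = (phi (evJ a) == enum_val (A := mem Jp) (cast_ord e b)).
  apply/eqP/eqP => [<-|E].
    by rewrite cast_ordKV enum_rankK_in // phiJ.
  apply: (@cast_ord_inj _ _ e); rewrite cast_ordKV E.
  by rewrite enum_valK_in.
apply: (@det_signed_perm F _ _ pi eps).
- move=> a1 a2 /eqP; rewrite piE cast_ordKV enum_rankK_in ?phiJ // => /eqP E.
  apply: enum_val_inj; move: E; rewrite /phi.
  have n1 : evJ a1 != mo by apply: contraNneq hmoJ => <-.
  have n2 : evJ a2 != mo by apply: contraNneq hmoJ => <-.
  case: eqP => [E1|_]; case: eqP => [E2|_] //.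
  + by move=> _; rewrite /evJ in E1 E2; rewrite E1 E2.
  + by move=> E; rewrite E eqxx in n2.
  + by move=> E; rewrite -E eqxx in n1.
- by move=> a; rewrite /eps; case: ifP => _; rewrite ?oppr_eq0 oner_neq0.
move=> a b; rewrite mxE piE -/(evJ a).
set x := evJ a; set y := enum_val (A := mem Jp) (cast_ord e b).
have hx : x \in J by apply: evJP.
have hy : y \in Jp by apply: enum_valP.
have xmo : x != mo by apply: contraNneq hmoJ => <-.
rewrite /eps /phi -/x.
case: (eqVneq y mo) => [ey|ny].
  rewrite ey hB2 (negbTE xmo).
  case: (eqVneq x j) => [xj|nxj]; first by rewrite eqxx mulr1 sub0r.
  by rewrite (negbTE xmo) mulr0 subr0.
rewrite hB1 //.
case: (eqVneq x j) => [xj|nxj].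
  have /negbTE -> : mo != y by rewrite eq_sym.
  have /negbTE -> : x != y by rewrite xj; apply: contraNneq jJp => ->.
  by rewrite mulr0.
by rewrite mul1r.
Qed.

End Transv.
Section Mat.
Variables (F : fieldType) (n : nat).
Implicit Types (A M N P g : 'M[F]_n).

Lemma col_mulmx m p q (A : 'M[F]_(m, p)) (B : 'M[F]_(p, q)) k :
  col k (A *m B) = A *m col k B.
Proof. by rewrite !colE mulmxA. Qed.

Lemma eq_cols M N : (forall k, col k M = col k N) -> M = N.
Proof.
move=> h; apply/matrixP => i k; move/colP: (h k) => /(_ i).
by rewrite !mxE.
Qed.

Lemma coord_inv_eq P g X : P \in unitmx -> g \in unitmx ->
  g *m (P *m X) = P -> coord_inv P g = X.
Proof.
move=> hP hg h; rewrite /coord_inv -mulmxA.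
have -> : invmx g *m P = P *m X by rewrite -{1}h mulKmx.
by rewrite mulKmx.
Qed.

Lemma root_vector_mx (l : 'rV[F]_n) g a : root_vector l g a -> g = 1%:M + a *m l.
Proof.
move=> h; apply: eq_cols => k.
rewrite [LHS]colE [RHS]colE h mulmxDl mul1mx -mulmxA.
congr (_ + _); rewrite /lval.
rewrite [l *m _]mx11_scalar mul_mx_scalar.
by rewrite mxE mulr1n.
Qed.

Lemma lval_colP (l : 'rV[F]_n) P k : lval l (col k P) = (l *m P) 0 k.
Proof. by rewrite /lval -col_mulmx mxE. Qed.

Lemma coord_inv_transv P (l : 'rV[F]_n) t (j mo : 'I_n) :
  P \in unitmx -> t \in unitmx -> root_vector l t (col j P) ->
  lval l (col j P) = 0 -> (forall k, lval l (col k P) = (k == mo)%:R) ->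
  coord_inv P t = 1%:M - delta_mx j mo.
Proof.
move=> hP ht hr hj hk; apply: coord_inv_eq => //.
set a := col j P.
have hlP : l *m P = delta_mx 0 mo.
  by apply/matrixP => i k; rewrite ord1 -lval_colP hk mxE eqxx.
have hla : l *m a = 0.
  by apply/matrixP => i k; rewrite !ord1 [RHS]mxE; exact: hj.
have hPd : P *m delta_mx j mo = a *m delta_mx 0 mo.
  by rewrite /a colE -mulmxA mul_delta_mx.
rewrite (@root_vector_mx _ _ _ hr) -/a mulmxBr mulmx1 hPd mulmxDl mul1mx.
rewrite mulmxBr -!mulmxA hlP (mulmxA l a) hla mul0mx mulmx0 subr0.
by rewrite subrK.
Qed.

Lemma coord_inv_diag P s (d w : 'I_n -> F) :
  P \in unitmx -> s \in unitmx ->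
  (forall k, s *m col k P = d k *: col k P) -> (forall k, w k * d k = 1) ->
  coord_inv P s = diag_mx (\row_k w k).
Proof.
move=> hP hs hd hw; apply: coord_inv_eq => //; apply: eq_cols => k.
have hc : col k (P *m diag_mx (\row_k w k)) = w k *: col k P.
  by apply/colP => i; rewrite mul_mx_diag !mxE mulrC.
by rewrite col_mulmx hc -scalemxAr hd scalerA hw scale1r.
Qed.

Lemma pow_col s P (d : 'I_n -> F) k i :
  (forall i, s *m col i P = d i *: col i P) ->
  (s ^+ k) *m col i P = d i ^+ k *: col i P.
Proof.
move=> hd; elim: k => [|k ih].
  by rewrite expr0 scale1r mul1mx.
by rewrite exprSr -mulmxE -mulmxA hd -scalemxAr ih scalerA -exprS.
Qed.

Lemma pow_one s P (d : 'I_n -> F) k : P \in unitmx ->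
  (forall i, s *m col i P = d i *: col i P) -> (forall i, d i ^+ k = 1) ->
  s ^+ k = 1%:M.
Proof.
move=> hP hd h1.
have E : s ^+ k *m P = P.
  by apply: eq_cols => i; rewrite col_mulmx (@pow_col s P d k i hd) h1 scale1r.
by rewrite -(mulmxK hP (s ^+ k)) E mulmxV.
Qed.

End Mat.


Section Forms.
Variables (F : fieldType) (n : nat).
Implicit Types (B : 'M[F]_n) (mu : diff_form F n).

Lemma act_form_unit B mu (J : {set 'I_n}) : (forall i k, k \in J -> B i k = (i == k)%:R) ->
  act_form B mu J = act_poly B (mu J).
Proof.
move=> h; rewrite /act_form (bigD1 J) //= (@minor_unit_cols F n B J J h) eqxx.
rewrite big1 ?addr0 ?mulr1n ?mpolyC1 ?mulr1 // => I nIJ.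
by rewrite (@minor_unit_cols F n B I J h) (negbTE nIJ) mulr0n mpolyC0 mulr0.
Qed.

Lemma act_form_Jp B mu (j mo : 'I_n) (J : {set 'I_n}) :
  j != mo ->
  (forall i k, k != mo -> B i k = (i == k)%:R) ->
  (forall i, B i mo = (i == mo)%:R - (i == j)%:R) ->
  j \in J -> mo \notin J ->
  act_form B mu (mo |: (J :\ j)) =
  act_poly B (mu (mo |: (J :\ j))) + wedge_minor B J (mo |: (J :\ j)) *: act_poly B (mu J).
Proof.
move=> hjmo hB1 hB2 hjJ hmoJ.
set Jp := mo |: (J :\ j).
have nJJp : J != Jp.
  by apply: contraNneq hmoJ => ->; rewrite /Jp setU11.
rewrite /act_form (bigD1 Jp) //= (bigD1 J) //=.
rewrite big1 ?addr0; last first.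
  move=> I /andP [n1 n2].
  by rewrite (@minor_other F n B j mo hjmo hB1 hB2 J hjJ hmoJ I n1 n2) mpolyC0 mulr0.
rewrite (@minorJpJp F n B j mo hjmo hB1 hB2 J) mpolyC1 mulr1.
by rewrite mulrC mul_mpolyC.
Qed.

Lemma lin_subst_diff B (mo : 'I_n) : (forall i k, k != mo -> B i k = (i == k)%:R) ->
  forall i, mdvd ('X_mo) (tnth (lin_subst B) i - 'X_i).
Proof.
move=> hB i; rewrite tnth_mktuple (bigD1 i) //= addrAC.
have hX : mdvd ('X_mo : {mpoly F[n]}) 'X_mo by exists 1; rewrite mul1r.
apply: mdvdD.
  case: (eqVneq i mo) => [->|ni].
    rewrite -[X in _ - X](scale1r 'X_mo) -scalerBl; exact: mdvdZ.
  by rewrite hB // eqxx scale1r subrr; apply: mdvd0.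
apply: mdvd_sum => k nki.
case: (eqVneq k mo) => [->|nk]; first exact: mdvdZ.
rewrite hB // eq_sym (negbTE nki) scale0r; exact: mdvd0.
Qed.

Lemma lin_subst_diag (w : 'I_n -> F) i :
  tnth (lin_subst (diag_mx (\row_k w k))) i = w i *: 'X_i.
Proof.
rewrite tnth_mktuple (bigD1 i) //= big1 ?addr0.
  by rewrite !mxE eqxx mulr1n.
move=> k nki; rewrite !mxE eq_sym (negbTE nki) mulr0n scale0r //.
Qed.

End Forms.

Theorem lemma3p3 (F : fieldType) (n : nat)
  (* char F <> 2 *)
  (hchar : (2 \notin [pchar F])%N)
  (* hyperplane H = ker l *)
  (l : 'rV[F]_n) (hl : l != 0)
  (* finite group G_H <= GL(V) fixing H pointwise *)
  (G : seq 'M[F]_n) (hGuniq : uniq G) (hG1 : 1%:M \in G)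
  (hGunit : forall g, g \in G -> g \in unitmx)
  (hGmul : forall g h, g \in G -> h \in G -> g *m h \in G)
  (hGinv : forall g, g \in G -> invmx g \in G)
  (hGfix : forall g, g \in G -> forall v, lval l v = 0 -> g *m v = v)
  (* K_H = kernel of det on G_H, e_H = |G_H : K_H| *)
  (K : seq 'M[F]_n) (hK : K = [seq g <- G | \det g == 1])
  (e : nat) (he : e = (size G %/ size K)%N)
  (* s_H: element of G_H of order e_H, a diagonalizable reflection if e_H > 1 *)
  (s : 'M[F]_n) (hs : s \in G) (hse : s ^+ e = 1%:M)
  (hsord : forall k, (0 < k < e)%N -> s ^+ k != 1%:M)
  (hsdiag : (1 < e)%N -> diag_reflection l s)
  (* b_H = dim of span of root vectors of transvections in K_H *)
  (b : nat) (hb : span_dimension (transvection_root l K) b)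
  (* basis v_1..v_n = columns of P *)
  (P : 'M[F]_n) (hP : P \in unitmx)
  (hPH : forall i : 'I_n, (i < n.-1)%N -> lval l (col i P) = 0)
  (hPb : forall i : 'I_n, (i < b)%N -> transvection_root l K (col i P))
  (hPn : forall i : 'I_n, i = n.-1 :> nat ->
           lval l (col i P) = 1 /\ exists c : F, s *m col i P = c *: col i P) :
  (forall mu : diff_form F n, invariant_form P K mu ->
     forall J : {set 'I_n},
       (exists2 j, j \in J & (j < b)%N) -> (forall j, j \in J -> j != n.-1 :> nat) ->
       mdvd (lpoly P l) (mu J))
  /\
  (forall mu : diff_form F n, invariant_form P G mu ->
     forall J : {set 'I_n},
       (exists2 j, j \in J & (j < b)%N) -> (forall j, j \in J -> j != n.-1 :> nat) ->
       mdvd (lpoly P l ^+ e) (mu J)).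
Proof.
have KG : forall g, g \in K -> g \in G.
  by move=> g; rewrite hK mem_filter => /andP [].
have [k0 _] : exists k : 'I_n, True.
  case: (pickP (fun k : 'I_n => true)) => [k _|none]; first by exists k.
  case/eqP: hl; apply/matrixP => i k; by have := none k.
have hn : (n.-1 < n)%N by rewrite ltn_predL (leq_ltn_trans (leq0n k0) (ltn_ord k0)).
pose mo : 'I_n := Ordinal hn.
have hPcol : forall k, lval l (col k P) = (k == mo)%:R.
  move=> k; case: (eqVneq k mo) => [->|nk]; first by have [-> _] := hPn mo erefl.
  apply: hPH; have : (k < n)%N := ltn_ord k.
  have : val k != n.-1 by apply: contra nk => /eqP E; apply/eqP; apply: val_inj.
  by move=> h1 h2; rewrite ltn_neqAle h1 -ltnS (ltn_predK h2) h2.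
have lpolyE : lpoly P l = 'X_mo.
  rewrite /lpoly (bigD1 mo) //= hPcol eqxx scale1r big1 ?addr0 //.
  by move=> k nk; rewrite hPcol (negbTE nk) scale0r.
have hnotmo : forall J : {set 'I_n}, (forall j, j \in J -> j != n.-1 :> nat) -> mo \notin J.
  by move=> J h; apply/negP => /h; rewrite eqxx.
have part1 : forall mu : diff_form F n, invariant_form P K mu -> forall J : {set 'I_n},
    (exists2 j, j \in J & (j < b)%N) -> mo \notin J -> mdvd 'X_mo (mu J).
  move=> mu hinv J [j hjJ hjb] hmoJ.
  have hjmo : j != mo by apply: contraNneq hmoJ => <-.
  have [t htK [_ hrt hlt]] := hPb j hjb.
  have htG := KG t htK.
  have hBE : coord_inv P t = 1%:M - delta_mx j mo.
    exact: (@coord_inv_transv F n P l t j mo hP (hGunit t htG) hrt hlt hPcol).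
  have hB1 : forall i k, k != mo -> coord_inv P t i k = (i == k)%:R.
    by move=> i k nk; rewrite hBE !mxE (negbTE nk) andbF subr0.
  have hB2 : forall i, coord_inv P t i mo = (i == mo)%:R - (i == j)%:R.
    by move=> i; rewrite hBE !mxE eqxx andbT.
  have e1 := hinv t htK J.
  rewrite (@act_form_unit F n (coord_inv P t) mu J) in e1; last first.
    by move=> i k hk; apply: hB1; apply: contraNneq hmoJ => <-.
  have e2 := hinv t htK (mo |: (J :\ j)).
  rewrite (@act_form_Jp F n (coord_inv P t) mu j mo J hjmo hB1 hB2 hjJ hmoJ) e1 in e2.
  have hsg := @minorJJp F n (coord_inv P t) j mo hjmo hB1 hB2 J hjJ hmoJ.
  set sg := wedge_minor _ J _ in e2 hsg.
  have hd := @mdvd_comp_diff F n 'X_mo _ (@lin_subst_diff F n (coord_inv P t) mo hB1) (mu (mo |: (J :\ j))).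
  have E : sg *: mu J = - (act_poly (coord_inv P t) (mu (mo |: J :\ j)) - mu (mo |: J :\ j)).
    by rewrite -{2}e2 opprB addrC addKr.
  have -> : mu J = sg^-1 *: (sg *: mu J) by rewrite scalerA mulVf // scale1r.
  by apply: mdvdZ; rewrite E; apply: mdvdN.
split.
  move=> mu hinv J hJb hJn; rewrite lpolyE; exact: part1 mu hinv J hJb (hnotmo J hJn).
move=> mu hinv J hJb hJn.
have hinvK : invariant_form P K mu by move=> g hg; apply: hinv; exact: KG.
have hmoJ := hnotmo J hJn.
have d1 := part1 mu hinvK J hJb hmoJ.
rewrite lpolyE.
case: (ltnP 1 e) => he1; last first.
  case: e he1 {he hse hsord hsdiag} => [|[|//]] _.
    by exists (mu J); rewrite expr0 mulr1.
  by rewrite expr1.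
have [_ [c hc]] := hPn mo erefl.
pose d k := if k == mo then c else 1.
have hd : forall k, s *m col k P = d k *: col k P.
  move=> k; rewrite /d; case: eqP => [->//|/eqP nk].
  by rewrite scale1r (hGfix s hs) // hPcol (negbTE nk).
have hsu := hGunit s hs.
have c0 : c != 0.
  apply/eqP => c0; move: hc; rewrite c0 scale0r => /(congr1 (mulmx (invmx s))).
  rewrite mulKmx // mulmx0 => hz.
  by have := hPcol mo; rewrite hz /lval mulmx0 mxE eqxx => /eqP; rewrite eq_sym oner_eq0.
pose w k := if k == mo then c^-1 else 1.
have hw : forall k, w k * d k = 1.
  by move=> k; rewrite /w /d; case: eqP => _; rewrite ?mulVf ?mul1r.
have hBs := @coord_inv_diag F n P s d w hP hsu hd hw.
have e3 := hinv s hs J.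
rewrite (@act_form_unit F n (coord_inv P s) mu J) in e3; last first.
  move=> i k hk; rewrite hBs !mxE /w.
  have kmo : k != mo by apply: contraNneq hmoJ => <-.
  case: (eqVneq i k) => [->|_]; last by rewrite !mulr0n.
  by rewrite (negbTE kmo).
apply: supp_mdvdX => m hm.
have hm1 := @mdvdX_supp F n mo (mu J) d1 m hm.
have hcoef := @comp_diag_coef F n (lin_subst (diag_mx (\row_k w k))) w (mu J) m (@lin_subst_diag F n w).
rewrite -hBs [comp_mpoly _ _]e3 in hcoef.
have hprod : \prod_i w i ^+ m i = c^-1 ^+ m mo.
  rewrite (bigD1 mo) //= big1 ?mulr1 /w ?eqxx //.
  by move=> i /negbTE ->; rewrite expr1n.
rewrite hprod in hcoef.
have hc1 : c ^+ m mo = 1.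
  have : c^-1 ^+ m mo = 1.
    apply/eqP; rewrite -subr_eq0; apply/eqP.
    have hnz : (mu J)@_m != 0 by rewrite -mcoeff_msupp.
    apply: (mulIf hnz); rewrite mul0r mulrBl mul1r -hcoef subrr //.
  by rewrite exprVn => /(congr1 GRing.inv); rewrite invrK invr1.
rewrite leqNgt; apply/negP => hlt.
have hk : (0 < m mo < e)%N by rewrite hm1 hlt.
have := hsord (m mo) hk.
rewrite (@pow_one F n s P d (m mo) hP hd) ?eqxx //.
by move=> i; rewrite /d; case: eqP => _; rewrite ?hc1 ?expr1n.
Qed.
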